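(* Let $r\ge1$, $B>0$, $P$ a finite arc set with $c\in\mathbb{R}_{\ge0}^P$ and $P_+=\{a\in P:c_a>0\}\neq\emptyset$. The minimum of $\sum_{a\in P_+}c_a y_a$ over $y\in\mathbb{R}_{>0}^{P_+}$ with $\sum_{a\in P_+}y_a^{-r}=B$ is attained uniquely at $y_a=\dfrac{\left(\sum_{a'\in P}c_{a'}^{r/(r+1)}\right)^{1/r}}{c_a^{1/(r+1)}B^{1/r}}$ for $a\in P_+$, and the minimum value equals $\left(\sum_{a\in P}\left(c_a/B^{1/r}\right)^{r/(r+1)}\right)^{(r+1)/r}$. Consequently, the optimal value (infimum) of the Network Design Problem with $\bar y\equiv\infty$ equals $\min_{P\in\mathcal{P}}\left[\left(\sum_{a\in P}c'_a\right)^{(r+1)/r}+\sum_{a\in P}\gamma_a\right]$ where $c'_a=(c_a/B^{1/r})^{r/(r+1)}$ and $\mathcal{P}$ is the set of $s$--$t$ paths of $G$.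
   Context: Fix $r\ge1$. Let $G=(V,A)$ be a weakly connected directed graph with distinct source $s$ and sink $t$; $\mathcal P$ denotes the set of (arc sets of) $s$--$t$ paths in the underlying undirected graph. For $y\in\mathbb{R}_{\ge 0}^A$ let $\operatorname{supp}(y)=\{a: y_a>0\}$, $G'=(V,\operatorname{supp}(y))$ with node-arc incidence matrix $\Gamma'$, and $R^y_{s,t}=\min\{\sum_{a\in\operatorname{supp}(y)} |f_a|^{r+1}/y_a^{r} : \Gamma' f=\mathbf{1}_s-\mathbf{1}_t\}$ ($=\infty$ if $s,t$ are disconnected in $G'$). The Network Design Problem, given $c,\gamma\in\mathbb{R}_{\ge0}^A$, bounds $\bar y\in(\mathbb{R}_{\ge0}\cup\{\infty\})^A$ and $B>0$, asks for the infimum of $\sum_{a\in A}(c_a y_a+\gamma_a x_a)$ over $x\in\{0,1\}^A$, $y\in\mathbb{R}_{\ge0}^A$ subject to $R^y_{s,t}\le B$, $y_a\le \bar y_a$, and $y_a>0\Rightarrow x_a=1$ for all $a$. *)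

(* Defs.v *)
From HB Require Import structures.
From mathcomp Require Import all_boot all_order all_algebra.
From mathcomp Require Import all_classical all_reals all_analysis.
Set Implicit Arguments. Unset Strict Implicit. Unset Printing Implicit Defensive.
Import Order.TTheory GRing.Theory Num.Theory.
Local Open Scope ring_scope.
Local Open Scope classical_set_scope.

Section NDP.
Variables (R : realType) (V A : finType) (src tgt : A -> V).

Definition uadj : rel V := fun u v =>
  [exists a, ((src a == u) && (tgt a == v)) || ((src a == v) && (tgt a == u))].

Definition weakly_connected : Prop := forall u v : V, connect uadj u v.

Definition joins (a : A) (u v : V) : bool :=
  ((src a == u) && (tgt a == v)) || ((src a == v) && (tgt a == u)).

Definition is_st_path (s t : V) (P : {set A}) : Prop :=
  exists (p : seq A) (vs : seq V),
    [/\ size vs = (size p).+1, head s vs = s /\ last s vs = t, uniq vs,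
        (forall (i : nat) (a0 : A), (i < size p)%N ->
            joins (nth a0 p i) (nth s vs i) (nth s vs i.+1)) &
        P = [set a in p]].

Definition supp (y : A -> R) : pred A := fun a => 0 < y a.

(* f is a unit s--t flow on G' = (V, supp y):  Gamma' f = 1_s - 1_t,
   with f represented on A and vanishing outside supp y. *)
Definition is_unit_flow (s t : V) (y : A -> R) (f : A -> R) : Prop :=
  (forall a, ~~ supp y a -> f a = 0) /\
  forall v : V, \sum_(a | src a == v) f a - \sum_(a | tgt a == v) f a
                = (v == s)%:R - (v == t)%:R.

(* R^y_{s,t}; the infimum of the empty set is +oo (s,t disconnected in G') *)
Definition Reff (r : R) (s t : V) (y : A -> R) : \bar R :=
  ereal_inf [set (\sum_(a | supp y a) (`|f a| `^ (r + 1) / y a `^ r))%:E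
            | f in [set f | is_unit_flow s t y f]].

(* NDP objective and feasibility (with upper bounds ybar == +oo, i.e. none) *)
Definition ndp_obj (c gamma : A -> R) (x : A -> bool) (y : A -> R) : R :=
  \sum_a (c a * y a + gamma a * (x a)%:R).

Definition ndp_feasible (r B : R) (s t : V) (x : A -> bool) (y : A -> R) : Prop :=
  [/\ forall a, 0 <= y a,
      (Reff r s t y <= B%:E)%E
    & forall a, 0 < y a -> x a].

Definition ndp_value (r B : R) (s t : V) (c gamma : A -> R) : \bar R :=
  ereal_inf [set (ndp_obj c gamma xy.1 xy.2)%:E
            | xy in [set xy : (A -> bool) * (A -> R) | ndp_feasible r B s t xy.1 xy.2]].

Definition cprime (r B : R) (c : A -> R) (a : A) : R :=
  (c a / B `^ (r^-1)) `^ (r / (r + 1)).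

Definition path_value (r B : R) (c gamma : A -> R) (P : {set A}) : R :=
  (\sum_(a in P) cprime r B c a) `^ ((r + 1) / r) + \sum_(a in P) gamma a.

End NDP.

(* Main.v *)
Require Import Defs.
From HB Require Import structures.
From mathcomp Require Import all_boot all_order all_algebra.
From mathcomp Require Import all_classical all_reals all_analysis.
Import Order.TTheory GRing.Theory Num.Theory.
From mathcomp Require Import lra ring zify.
Local Open Scope ring_scope.
Local Open Scope classical_set_scope.
Section A.
Variable R : realType.
Lemma ln_le_sub (u m : R) : 0 < u -> 0 < m -> ln u - ln m <= u / m - 1.
Proof.
move=> u0 m0.
have := expR_ge1Dx (ln u - ln m).
rewrite expRD expRN !lnK ?posrE //. lra.
Qed.
Lemma ln_lt_sub (u m : R) : 0 < u -> 0 < m -> u != m -> ln u - ln m < u / m - 1.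
Proof.
move=> u0 m0 um.
have : ln u - ln m != 0.
  rewrite subr_eq0; apply/negP => /eqP/ln_inj h.
  by move: um; rewrite h ?posrE ?eqxx.
move=> /expR_gt1Dx.
rewrite expRD expRN !lnK ?posrE //. lra.
Qed.
Lemma powRE (x p : R) : 0 < x -> x `^ p = expR (p * ln x).
Proof. by move=> x0; rewrite /powR gt_eqF. Qed.

Lemma amgm_pos (a u v : R) : 0 < a < 1 -> 0 < u -> 0 < v ->
  u `^ a * v `^ (1 - a) <= a * u + (1 - a) * v /\
  (u `^ a * v `^ (1 - a) = a * u + (1 - a) * v -> u = v).
Proof.
move=> /andP[a0 a1] u0 v0.
set m := a * u + (1 - a) * v.
have m0 : 0 < m by rewrite /m; nra.
have hm : a * (u / m) + (1 - a) * (v / m) = 1.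
  by rewrite /m; field; rewrite gt_eqF.
have E : u `^ a * v `^ (1 - a) = expR (a * ln u + (1 - a) * ln v).
  by rewrite !powRE // expRD.
have h1 := ln_le_sub _ _ u0 m0; have h2 := ln_le_sub _ _ v0 m0.
have key : a * ln u + (1 - a) * ln v <= ln m.
  have : a * (ln u - ln m) + (1 - a) * (ln v - ln m) <= 0.
    have -> : 0 = a * (u / m - 1) + (1 - a) * (v / m - 1) by lra.
    by apply: lerD; apply: ler_wpM2l => //; lra.
  lra.
split.
  by rewrite E -[m]lnK ?posrE // ler_expR.
rewrite E => eq.
have um : u = m.
  apply/eqP; apply/negPn/negP => um.
  have h1' := ln_lt_sub _ _ u0 m0 um.
  have : a * ln u + (1 - a) * ln v < ln m.
    have : a * (ln u - ln m) + (1 - a) * (ln v - ln m) < 0.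
      have -> : 0 = a * (u / m - 1) + (1 - a) * (v / m - 1) by lra.
      apply: ltr_leD; first by rewrite ltr_pM2l.
      by apply: ler_wpM2l => //; lra.
    lra.
  by rewrite -ltr_expR lnK ?posrE // eq ltxx.
have hm' : m = a * u + (1 - a) * v by [].
rewrite um in hm'.
clearbody m.
have : (1 - a) * v = (1 - a) * m by nra.
move/mulfI; rewrite subr_eq0 eq_sym (lt_eqF a1) => /(_ isT) ->.
by [].
Qed.
Lemma amgm (a u v : R) : 0 < a < 1 -> 0 <= u -> 0 <= v ->
  u `^ a * v `^ (1 - a) <= a * u + (1 - a) * v /\
  (u `^ a * v `^ (1 - a) = a * u + (1 - a) * v -> u = v).
Proof.
move=> /andP[a0 a1]; rewrite le_eqVlt => /predU1P[<-|u0].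
  move=> v0; rewrite powR0 ?gt_eqF // mul0r mulr0 add0r; split.
    by apply: mulr_ge0 => //; lra.
  by move/esym/eqP; rewrite mulf_eq0 subr_eq0 eq_sym (lt_eqF a1) /= => /eqP.
rewrite le_eqVlt => /predU1P[<-|v0].
  rewrite powR0 ?subr_eq0 1?eq_sym ?(lt_eqF a1) // mulr0 mulr0 addr0; split.
    by apply: mulr_ge0 => //; lra.
  by move/esym/eqP; rewrite mulf_eq0 (gt_eqF a0) /= => /eqP.
by apply: amgm_pos => //; rewrite a0 a1.
Qed.

Lemma term_split (a u v U W : R) : 0 <= u -> 0 <= v -> 0 < U -> 0 < W ->
  u `^ a * v `^ (1 - a) = U `^ a * W `^ (1 - a) * ((u / U) `^ a * (v / W) `^ (1 - a)).
Proof.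
move=> u0 v0 U0 W0.
have h1 : U `^ a * (u / U) `^ a = u `^ a.
  rewrite -powRM; [|exact: ltW|exact: divr_ge0 u0 (ltW U0)].
  by rewrite mulrC divfK // gt_eqF.
have h2 : W `^ (1 - a) * (v / W) `^ (1 - a) = v `^ (1 - a).
  rewrite -powRM; [|exact: ltW|exact: divr_ge0 v0 (ltW W0)].
  by rewrite mulrC divfK // gt_eqF.
rewrite -h1 -h2; ring.
Qed.

Section Holder.
Variables (I : finType) (D : pred I) (a : R) (u v : I -> R).
Hypothesis ha : 0 < a < 1.
Hypothesis huv : forall i, D i -> 0 <= u i /\ 0 <= v i.

Let U := \sum_(i | D i) u i.
Let W := \sum_(i | D i) v i.

Lemma sum_aff (U0 W0 : R) : 0 < U0 -> 0 < W0 ->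
  \sum_(i | D i) (a * (u i / U0) + (1 - a) * (v i / W0)) =
  a * (\sum_(i | D i) u i) / U0 + (1 - a) * (\sum_(i | D i) v i) / W0.
Proof.
move=> U00 W00; rewrite big_split /= !mulr_sumr !mulr_suml.
by congr (_ + _); apply: eq_bigr => i _; rewrite mulrA.
Qed.

Lemma holder :
  \sum_(i | D i) u i `^ a * v i `^ (1 - a) <= U `^ a * W `^ (1 - a).
Proof.
have U0 : 0 <= U by apply: sumr_ge0 => i /huv[].
have W0 : 0 <= W by apply: sumr_ge0 => i /huv[].
case/andP: (ha) => a0 a1.
move: U0; rewrite le_eqVlt => /predU1P[U0|U0].
  have uz : forall i, D i -> u i = 0.
    by apply/psumr_eq0P; [move=> i /huv[]| rewrite -/U -U0].
  rewrite big1; first by apply: mulr_ge0; apply: powR_ge0.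
  by move=> i Di; rewrite uz // powR0 ?gt_eqF // mul0r.
move: W0; rewrite le_eqVlt => /predU1P[W0|W0].
  have vz : forall i, D i -> v i = 0.
    by apply/psumr_eq0P; [move=> i /huv[]| rewrite -/W -W0].
  rewrite big1; first by apply: mulr_ge0; apply: powR_ge0.
  by move=> i Di; rewrite vz // powR0 ?subr_eq0 1?eq_sym ?(lt_eqF a1) // mulr0.
rewrite (eq_bigr (fun i => U `^ a * W `^ (1 - a) *
   ((u i / U) `^ a * (v i / W) `^ (1 - a)))); last first.
  by move=> i /huv[ui vi]; rewrite (term_split _ _ _ _ _ ui vi U0 W0).
rewrite -mulr_sumr ger_pMr ?mulr_gt0 ?powR_gt0 //.
apply: le_trans (_ : \sum_(i | D i) (a * (u i / U) + (1 - a) * (v i / W)) <= 1).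
  apply: ler_sum => i /huv[ui vi].
  by case: (amgm a (u i / U) (v i / W) ha (divr_ge0 ui (ltW U0)) (divr_ge0 vi (ltW W0))).
rewrite sum_aff // -/U -/W -!mulrA !divff ?gt_eqF // !mulr1; lra.
Qed.

Lemma holder_eq : 0 < U -> 0 < W ->
  \sum_(i | D i) u i `^ a * v i `^ (1 - a) = U `^ a * W `^ (1 - a) ->
  forall i, D i -> u i / U = v i / W.
Proof.
move=> U0 W0 heq.
case/andP: (ha) => a0 a1.
have P0 : 0 < U `^ a * W `^ (1 - a) by rewrite mulr_gt0 ?powR_gt0.
set g := fun i => a * (u i / U) + (1 - a) * (v i / W) -
   (u i / U) `^ a * (v i / W) `^ (1 - a).
have g0 : forall i, D i -> 0 <= g i.
  move=> i /huv[ui vi]; rewrite /g subr_ge0.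
  by case: (amgm a (u i / U) (v i / W) ha (divr_ge0 ui (ltW U0)) (divr_ge0 vi (ltW W0))).
have sg : \sum_(i | D i) g i = 0.
  rewrite /g sumrB sum_aff // -/U -/W -!mulrA !divff ?gt_eqF // !mulr1.
  have : \sum_(i | D i) (u i / U) `^ a * (v i / W) `^ (1 - a) = 1.
    have hinj := mulfI (lt0r_neq0 P0); apply: hinj; rewrite mulr1 mulr_sumr -[RHS]heq.
    by apply: eq_bigr => i /huv[ui vi]; rewrite (term_split _ _ _ _ _ ui vi U0 W0).
  move=> ->; lra.
move=> i Di.
have := psumr_eq0P g0 sg Di; rewrite /g => /eqP; rewrite subr_eq0 => /eqP /esym.
have [ui vi] := huv i Di.
by case: (amgm a (u i / U) (v i / W) ha (divr_ge0 ui (ltW U0)) (divr_ge0 vi (ltW W0))).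
Qed.
End Holder.
End A.

Section P1.
Variables (R : realType) (r B : R).
Hypotheses (hr : 1 <= r) (hB : 0 < B).

Let r0 : 0 < r. Proof. have := hr; lra. Qed.
Let r10 : 0 < r + 1. Proof. have := hr; lra. Qed.
Let hal : 0 < r / (r + 1) < 1.
Proof. apply/andP; split; first by rewrite divr_gt0.
rewrite ltr_pdivrMr //; have := hr; lra. Qed.
Let hbe : 1 - r / (r + 1) = (r + 1)^-1.
Proof. field; rewrite gt_eqF //. Qed.

Ltac pos := rewrite ?posrE; match goal with
  | |- is_true (0 < _ * _) => apply: mulr_gt0; pos
  | |- is_true (0 < _^-1) => rewrite invr_gt0; pos
  | |- is_true (0 < _ `^ _) => apply: powR_gt0; pos
  | _ => done
  end.
Ltac lnexp := repeat (first [rewrite ln_powR | rewrite lnM; try pos | rewrite lnV; try pos]).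
Ltac fsolve := field; repeat (apply/andP; split); done.

Lemma pos_ln_eq (x y : R) : 0 < x -> 0 < y -> ln x = ln y -> x = y.
Proof. by move=> x0 y0 /ln_inj; apply; rewrite posrE. Qed.

Ltac lnpos := rewrite ?posrE ?powR_gt0 ?mulr_gt0 ?divr_gt0 ?invr_gt0 //.


Lemma part1 (T : finType) (P : {set T}) (c : T -> R) :
     (forall a, a \in P -> 0 <= c a) ->
     let Pp := [set a in P | 0 < c a] in
     Pp != finset.set0 ->
     let ystar := fun a : T =>
       (\sum_(a' in P) c a' `^ (r / (r + 1))) `^ (r^-1)
         / (c a `^ ((r + 1)^-1) * B `^ (r^-1)) in
     let feas := fun y : T -> R =>
       (forall a, a \in Pp -> 0 < y a) /\ \sum_(a in Pp) y a `^ (- r) = B in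
     let obj := fun y : T -> R => \sum_(a in Pp) c a * y a in
     let val := (\sum_(a in P) (c a / B `^ (r^-1)) `^ (r / (r + 1))) `^ ((r + 1) / r) in
     [/\ feas ystar, obj ystar = val,
         forall y, feas y -> val <= obj y
       & forall y, feas y -> obj y = val -> forall a, a \in Pp -> y a = ystar a].
Proof.
move=> hc Pp hPp ystar feas obj val.
have hr' := hr; have hB' := hB.
have rn0 : r != 0 by rewrite gt_eqF.
have r1n0 : r + 1 != 0 by rewrite gt_eqF.
set S := \sum_(a' in P) c a' `^ (r / (r + 1)).
set Bq := B `^ r^-1.
have Bq0 : 0 < Bq by rewrite powR_gt0.
have cPp : forall a, a \in Pp -> 0 < c a by move=> a; rewrite inE => /andP[].
have alne0 : r / (r + 1) != 0 by case/andP: hal => h _; rewrite gt_eqF.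
have S_Pp : S = \sum_(a in Pp) c a `^ (r / (r + 1)).
  rewrite /S (bigID (fun a => 0 < c a)) /=.
  rewrite [X in _ + X]big1 ?addr0.
    by apply: eq_bigl => a; rewrite inE.
  move=> a /andP[aP]; have := hc a aP; rewrite le_eqVlt => /predU1P[<- _|->//].
  by rewrite powR0.
have [a0 a0P] := set0Pn _ hPp.
have S0 : 0 < S.
  rewrite S_Pp (bigD1 a0) //=.
  apply: ltr_wpDr; first by apply: sumr_ge0 => i _; apply: powR_ge0.
  by rewrite powR_gt0 // cPp.
have Sn0 : S != 0 by rewrite gt_eqF.
have Bqn0 : Bq != 0 by rewrite gt_eqF.
have Bn0 : B != 0 by rewrite gt_eqF.
have val_eq : val = S `^ ((r + 1) / r) / Bq.
  rewrite /val.
  rewrite (eq_bigr (fun a => c a `^ (r / (r + 1)) * (Bq^-1) `^ (r / (r + 1)))); last first.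
    by move=> a aP; rewrite powRM // ?hc // invr_ge0 ltW.
  rewrite -mulr_suml -/S powRM ?sumr_ge0 ?powR_ge0 //; last first.
    by move=> i _; apply: powR_ge0.
  rewrite -powRrM.
  have -> : r / (r + 1) * ((r + 1) / r) = 1 by fsolve.
  by rewrite powRr1 // invr_ge0 ltW.
have ystar_pos : forall a, a \in Pp -> 0 < ystar a.
  move=> a aP; rewrite /ystar -/S -/Bq.
  by rewrite divr_gt0 ?powR_gt0 ?mulr_gt0 ?powR_gt0 ?cPp.
have ystar_inv : forall a, a \in Pp -> ystar a `^ (- r) = c a `^ (r / (r + 1)) * B / S.
  move=> a aP; have ca := cPp a aP.
  apply: pos_ln_eq; rewrite ?powR_gt0 ?divr_gt0 ?mulr_gt0 ?powR_gt0 ?ystar_pos //.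
  rewrite /ystar -/S -/Bq /Bq.
  rewrite ln_powR ln_div ?posrE ?powR_gt0 ?mulr_gt0 ?powR_gt0 //.
  rewrite lnM ?posrE ?powR_gt0 //.
  rewrite ln_div ?posrE ?mulr_gt0 ?powR_gt0 //.
  rewrite lnM ?posrE ?powR_gt0 //.
  rewrite !ln_powR.
  fsolve.
have feas_star : feas ystar.
  split=> //.
  rewrite (eq_bigr _ ystar_inv) -!mulr_suml -S_Pp; fsolve.
have obj_star : obj ystar = val.
  rewrite /obj.
  rewrite (eq_bigr (fun a => c a `^ (r / (r + 1)) * (S `^ r^-1 / Bq))); last first.
    move=> a aP; have ca := cPp a aP.
    rewrite /ystar -/S -/Bq /Bq; apply: pos_ln_eq; try pos; lnexp; fsolve.
  rewrite -mulr_suml -S_Pp val_eq.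
  rewrite /Bq; apply: pos_ln_eq; try pos; lnexp; fsolve.
have al0 : 0 < r / (r + 1) by case/andP: hal.
have hterm : forall y, feas y -> forall a, a \in Pp ->
    (c a * y a) `^ (r / (r + 1)) * (y a `^ (- r)) `^ (1 - r / (r + 1)) = c a `^ (r / (r + 1)).
  move=> y [yp _] a aP; have ca := cPp a aP; have ya := yp a aP.
  rewrite hbe; apply: pos_ln_eq; try pos; lnexp; fsolve.
have hobj0 : forall y, feas y -> 0 < obj y.
  move=> y [yp _]; rewrite /obj (bigD1 a0) //=; apply: ltr_wpDr.
    by apply: sumr_ge0 => i /andP[iP _]; rewrite mulr_ge0 // ltW ?cPp ?yp.
  by rewrite mulr_gt0 ?cPp ?yp.
have huv : forall y, feas y -> forall a, a \in Pp -> 0 <= c a * y a /\ 0 <= y a `^ (- r).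
  move=> y [yp _] a aP; split; last exact: powR_ge0.
  by rewrite mulr_ge0 // ltW ?cPp ?yp.
have hhold : forall y, feas y -> S <= obj y `^ (r / (r + 1)) * B `^ (1 - r / (r + 1)).
  move=> y fy; have [yp ysum] := fy.
  have := @holder _ _ (fun a => a \in Pp) (r / (r + 1)) (fun a => c a * y a)
     (fun a => y a `^ (- r)) hal (huv y fy).
  rewrite /= (eq_bigr _ (hterm y fy)) -S_Pp -/(obj y) ysum; apply.
have lower : forall y, feas y -> val <= obj y.
  move=> y fy; have U0 := hobj0 y fy.
  rewrite val_eq ler_pdivrMr //.
  have e0 : 0 <= (r + 1) / r by rewrite divr_ge0 // ltW.
  apply: le_trans (_ : (obj y `^ (r / (r + 1)) * B `^ (1 - r / (r + 1))) `^ ((r + 1) / r) <= _).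
    by apply: (ge0_ler_powR e0); rewrite ?nnegrE ?mulr_ge0 ?powR_ge0 ?(ltW S0) // hhold.
  rewrite le_eqVlt; apply/orP; left; apply/eqP.
  rewrite hbe /Bq; apply: pos_ln_eq; try pos; lnexp; fsolve.
have cond : forall z, feas z -> obj z = val -> forall a, a \in Pp ->
    c a * z a / val = z a `^ (- r) / B.
  move=> z fz hz.
  have val0 : 0 < val by rewrite -hz hobj0.
  have z0 : 0 < obj z by rewrite hobj0.
  have [zp zsum] := fz.
  have heq : \sum_(a in Pp) (c a * z a) `^ (r / (r + 1)) * (z a `^ (- r)) `^ (1 - r / (r + 1))
      = obj z `^ (r / (r + 1)) * (\sum_(i in Pp) z i `^ (- r)) `^ (1 - r / (r + 1)).
    rewrite zsum (eq_bigr _ (hterm z fz)) -S_Pp hz val_eq.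
    rewrite hbe /Bq; apply: pos_ln_eq; try pos; lnexp; fsolve.
  have W0 : 0 < \sum_(i in Pp) z i `^ (- r) by rewrite zsum.
  have := @holder_eq _ _ (fun a => a \in Pp) (r / (r + 1)) (fun a => c a * z a)
     (fun a => z a `^ (- r)) hal (huv z fz) z0 W0 heq.
  by rewrite /= -/(obj z) zsum hz.
have lnchar : forall z, feas z -> obj z = val -> forall a, a \in Pp ->
    ln (z a) = (ln val - ln (c a) - ln B) / (r + 1).
  move=> z fz hz a aP.
  have val0 : 0 < val by rewrite -hz hobj0.
  have [zp _] := fz; have za := zp a aP; have ca := cPp a aP.
  have h := cond z fz hz a aP.
  have : ln (c a * z a / val) = ln (z a `^ (- r) / B) by rewrite h.
  lnexp => h2.
  apply: (mulIf r1n0); rewrite divfK //.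
  move: h2; set K := _ * ln _; set L := ln (z a); move=> h2.
  rewrite mulrDr mulr1; move: h2; rewrite mulNr (mulrC L); lra.
split => //.
move=> y fy hy a aP.
have [yp _] := fy.
apply: pos_ln_eq; [exact: yp | exact: ystar_pos|].
by rewrite (lnchar y fy hy a aP) (lnchar ystar feas_star obj_star a aP).
Qed.
End P1.

Local Close Scope classical_set_scope.

Lemma ex_min (R : realType) (T : finType) (Q : T -> Prop) (F : T -> R) :
  (exists x, Q x) -> exists x, Q x /\ forall y, Q y -> F x <= F y.
Proof.
move=> [x0 Qx0].
have h : `[< Q x0 >] by apply/asboolP.
case: (@arg_minP _ _ _ x0 (fun x => `[< Q x >]) F h) => i /asboolP Qi Hi.
by exists i; split => // y Qy; apply: Hi; apply/asboolP.
Qed.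

Lemma sub_sum (R : realType) (T : finType) (w : T -> R) (P Q : {set T}) :
  (forall b, 0 <= w b) -> Q \subset P -> \sum_(b in Q) w b <= \sum_(b in P) w b.
Proof.
move=> w0 QP; rewrite [X in _ <= X](big_setID Q) /= (finset.setIidPr QP) lerDl.
by apply: sumr_ge0 => b _.
Qed.

Section G.
Variables (V A : finType) (src tgt : A -> V) (s : V).

Definition pathto (S : pred A) v P :=
  is_st_path src tgt s v P /\ (forall a, a \in P -> S a).

Lemma joinsC a u v : joins src tgt a u v = joins src tgt a v u.
Proof. by rewrite /joins orbC. Qed.

Lemma pathto_s S : pathto S s finset.set0.
Proof.
split; last by move=> a; rewrite inE.
exists [::], [:: s]; split => //; try by apply/setP => a; rewrite !inE.
Qed.

Lemma pathto_ext (R : realType) (w : A -> R) S u v a P :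
  (forall b, 0 <= w b) -> pathto S u P -> S a -> joins src tgt a u v ->
  exists P', pathto S v P' /\ \sum_(b in P') w b <= \sum_(b in P) w b + w a.
Proof.
move=> w0 [[p [vs [hs [hh hl] hu hj hP]]] hPS] Sa ja.
have vs_ne : (0 < size vs)%N by rewrite hs.
case: (boolP (v \in vs)) => vin.
  set i := index v vs.
  have ilt : (i < size vs)%N by rewrite index_mem.
  have ilp : (i <= size p)%N by rewrite -ltnS -hs.
  exists [set b in take i p]; split; first split.
  - exists (take i p), (take i.+1 vs); split.
    + by rewrite size_takel // size_takel.
    + split.
        by case: vs hs hh hl hu hj vs_ne vin i ilt ilp => //= x l *.
      rewrite -nth_last size_takel // nth_take // nth_index //.
    + by rewrite take_uniq.
    + move=> j a0; rewrite size_takel // => ji.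
      rewrite nth_take // nth_take 1?ltnW // nth_take //.
      by apply: hj; apply: leq_trans ji ilp.
    + by [].
  - move=> b; rewrite inE => /mem_take bp; apply: hPS; by rewrite hP inE.
  - apply: (@le_trans _ _ (\sum_(b in P) w b)); last by rewrite lerDl.
    apply: sub_sum => //; apply/fintype.subsetP => b; rewrite inE => /mem_take bp.
    by rewrite hP inE.
exists (a |: P); split; first split.
- exists (rcons p a), (rcons vs v); split.
  + by rewrite !size_rcons hs.
  + case: vs hs hh hl hu hj vs_ne vin => //= x l *.
    by split => //; rewrite last_rcons.
  + by rewrite rcons_uniq vin.
  + move=> j a0; rewrite size_rcons ltnS leq_eqVlt => /orP[/eqP ->|jp].
      have hu2 : nth s vs (size p) = u by rewrite -hl -nth_last hs.
      rewrite !nth_rcons hs ltnn eqxx ltnSn /= hu2. by rewrite ltnn eqxx.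
    rewrite !nth_rcons hs !ltnS jp (ltnW jp) /=.
    by apply: hj.
  + by apply/setP => b; rewrite !inE mem_rcons in_cons hP inE.
- by move=> b; rewrite !inE => /orP[/eqP ->|/hPS].
- case: (boolP (a \in P)) => aP.
    have -> : a |: P = P by apply/setP => b; rewrite !inE; case: eqP => // ->.
    by rewrite lerDl.
  by rewrite big_setU1 //= addrC.
Qed.

Lemma conn_path (R : realType) t : weakly_connected src tgt ->
  exists P, is_st_path src tgt s t P.
Proof.
move=> hw; case/connectP: (hw s t) => p pp ->.
suff : forall x P, pathto predT x P -> path (uadj src tgt) x p ->
    exists P', pathto predT (last x p) P'.
  by move=> /(_ s finset.set0 (pathto_s _) pp) [P' [h _]]; exists P'.
elim: p {pp} => [|y p IH] x P hP /=; first by exists P.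
case/andP => /existsP[a ha] pp.
have [P' [hP' _]] := @pathto_ext R (fun _ => 0) predT x y a P (fun _ => lexx 0) hP isT ha.
exact: IH hP' pp.
Qed.

Lemma path_flow (R : realType) t P : is_st_path src tgt s t P ->
  exists f : A -> R, (forall a, a \notin P -> f a = 0) /\
    (forall a, a \in P -> `|f a| = 1) /\
    forall v, \sum_(a | src a == v) f a - \sum_(a | tgt a == v) f a
              = (v == s)%:R - (v == t)%:R.
Proof.
move=> [p [vs [hs [hh hl] hu hj hP]]].
have nE : forall k l, (k < size vs)%N -> (l < size vs)%N ->
    nth s vs k = nth s vs l -> k = l.
  by move=> k l hk hl2 e; apply/eqP; rewrite -(nth_uniq s hk hl2 hu) e.
have vs0 : nth s vs 0 = s by rewrite nth0.
have vsk : nth s vs (size p) = t by rewrite -hl -nth_last hs.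
case Ep : p => [|x0 p'].
  exists (fun _ => 0); split => //; split.
    by move=> a; rewrite hP Ep inE.
  move=> v; rewrite !big1 // subr0.
  move: vsk; rewrite Ep /= vs0 => <-; by rewrite subrr.
have up : uniq p.
  apply/(uniqP x0) => i j; rewrite !inE => hi hj' eq.
  have ji := hj i x0 hi; have jj := hj j x0 hj'.
  rewrite eq in ji.
  have hi1 : (i.+1 < size vs)%N by rewrite hs.
  have hj1 : (j.+1 < size vs)%N by rewrite hs.
  have hi0 : (i < size vs)%N by rewrite hs ltnS ltnW.
  have hj0 : (j < size vs)%N by rewrite hs ltnS ltnW.
  move: ji jj; rewrite /joins => /orP[/andP[/eqP e1 /eqP e2]|/andP[/eqP e1 /eqP e2]]
    /orP[/andP[/eqP e3 /eqP e4]|/andP[/eqP e3 /eqP e4]].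
  - by apply: nE; rewrite // -e1 e3.
  - have h1 := nE _ _ hi0 hj1 (etrans (esym e1) e3).
    have h2 := nE _ _ hi1 hj0 (etrans (esym e2) e4). lia.
  - have h1 := nE _ _ hi1 hj0 (etrans (esym e1) e3).
    have h2 := nE _ _ hi0 hj1 (etrans (esym e2) e4). lia.
  - have h1 := nE _ _ hi1 hj1 (etrans (esym e1) e3). lia.
pose f := fun a => if a \in p then (if src a == nth s vs (index a p) then 1 else -1) else (0 : R).
exists f; split.
  by move=> a; rewrite hP inE /f => /negbTE ->.
split.
  move=> a; rewrite hP inE /f => ->; case: ifP => _; by rewrite ?normrN normr1.
move=> v.
rewrite (big_mkcond (fun a => src a == v)) (big_mkcond (fun a => tgt a == v)) /= -sumrB.
rewrite (eq_bigr (fun a => ((src a == v)%:R - (tgt a == v)%:R) * f a)); last first.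
  by move=> a _; case: (src a == v); case: (tgt a == v); rewrite /=; ring.
rewrite (bigID (fun a => a \in p)) /= [X in _ + X]big1 ?addr0; last first.
  by move=> a /negbTE ha; rewrite /f ha mulr0.
rewrite -big_uniq // (big_nth x0) big_mkord.
rewrite (eq_bigr (fun i : 'I_(size p) => (nth s vs i == v)%:R - (nth s vs i.+1 == v)%:R)); last first.
  move=> [i hi] _ /=.
  have ain : nth x0 p i \in p by rewrite mem_nth.
  rewrite /f ain index_uniq //.
  have hi1 : (i.+1 < size vs)%N by rewrite hs.
  have hi0 : (i < size vs)%N by rewrite hs ltnS ltnW.
  have vne : nth s vs i != nth s vs i.+1.
    by rewrite (nth_uniq s hi0 hi1 hu) eqn_leq ltnn andbF.
  move: (hj i x0 hi); rewrite /joins => /orP[/andP[/eqP -> /eqP ->]|/andP[/eqP -> /eqP ->]].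
    by rewrite eqxx mulr1.
  rewrite [_ == nth s vs i]eq_sym (negbTE vne) mulrN1 opprB.
  by [].
rewrite -(big_mkord xpredT (fun i => (nth s vs i == v)%:R - (nth s vs i.+1 == v)%:R)).
rewrite (telescope_sumr_eq (fun k => - (nth s vs k == v)%:R : R)) //; last first.
  by move=> k _; rewrite opprK addrC.
by rewrite vs0 vsk opprK addrC (eq_sym v s) (eq_sym v t).
Qed.

Lemma sum_ind (R : realType) (d : V -> R) (x : V) :
  \sum_v d v * (v == x)%:R = d x.
Proof.
rewrite (bigD1 x) //= eqxx mulr1 big1 ?addr0 // => v /negbTE ->.
by rewrite mulr0.
Qed.

Lemma sum_part (R : realType) (d : V -> R) (f : A -> R) (g : A -> V) :
  \sum_a f a * d (g a) = \sum_v d v * \sum_(a | g a == v) f a.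
Proof.
rewrite (partition_big g xpredT) //=.
apply: eq_bigr => v _; rewrite mulr_sumr.
by apply: eq_bigr => a /eqP ->; rewrite mulrC.
Qed.

Lemma flow_path (R : realType) (y w f : A -> R) t :
  (forall a, 0 <= w a) -> is_unit_flow src tgt s t y f ->
  exists P, pathto (supp y) t P /\
    \sum_(a in P) w a <= \sum_(a | supp y a) w a * `|f a|.
Proof.
move=> w0 [fz fcons].
set S := supp y.
set K := \sum_(a | S a) w a * `|f a| + 1.
have hd : forall v, exists dv : R,
   ((exists P, pathto S v P) ->
      (exists P, pathto S v P /\ \sum_(a in P) w a = dv) /\
      forall Q, pathto S v Q -> dv <= \sum_(a in Q) w a) /\
   (~ (exists P, pathto S v P) -> dv = K).
  move=> v; case: (pselect (exists P, pathto S v P)) => h.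
    have [P [hP hmin]] := @ex_min R _ (fun P => pathto S v P) (fun P => \sum_(a in P) w a) h.
    exists (\sum_(a in P) w a); split => // _; split => //.
    by exists P.
  by exists K; split.
case: (choice hd) => d hdP.
have reach_s : exists P, pathto S s P by exists finset.set0; apply: pathto_s.
have ds : d s = 0.
  have [[P [hP hPd]] hmin] := (hdP s).1 reach_s.
  have := hmin _ (pathto_s S); rewrite big_set0 => h.
  by apply/eqP; rewrite eq_le h -hPd sumr_ge0.
have step : forall a u v, S a -> joins src tgt a u v ->
    (exists P, pathto S u P) -> (exists P, pathto S v P) /\ d v <= d u + w a.
  move=> a u v Sa ja hu.
  have [[P [hP hPd]] _] := (hdP u).1 hu.
  have [P' [hP' hw]] := @pathto_ext R w S u v a P w0 hP Sa ja.
  have hv : exists P, pathto S v P by exists P'.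
  split => //.
  have [_ hmin] := (hdP v).1 hv.
  by apply: le_trans (hmin _ hP') _; rewrite -hPd.
have bound : forall a, S a -> `|d (tgt a) - d (src a)| <= w a.
  move=> a Sa.
  have j1 : joins src tgt a (src a) (tgt a) by rewrite /joins !eqxx.
  have j2 : joins src tgt a (tgt a) (src a) by rewrite joinsC.
  case: (pselect (exists P, pathto S (src a) P)) => hs.
    have [ht h1] := step _ _ _ Sa j1 hs.
    have [_ h2] := step _ _ _ Sa j2 ht.
    rewrite ler_norml; apply/andP; split; lra.
  have ht : ~ (exists P, pathto S (tgt a) P).
    by move=> ht; apply: hs; have [] := step _ _ _ Sa j2 ht.
  rewrite ((hdP _).2 hs) ((hdP _).2 ht) subrr normr0; exact: w0.
have cons : \sum_a f a * (d (tgt a) - d (src a)) = d t - d s.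
  rewrite (eq_bigr (fun a => f a * d (tgt a) - f a * d (src a))); last first.
    by move=> a _; rewrite mulrBr.
  rewrite sumrB !sum_part.
  have -> : \sum_v d v * \sum_(a | tgt a == v) f a =
      \sum_v d v * \sum_(a | src a == v) f a - \sum_v d v * ((v == s)%:R - (v == t)%:R).
    rewrite -sumrB; apply: eq_bigr => v _; rewrite -fcons; ring.
  have -> : \sum_v d v * ((v == s)%:R - (v == t)%:R) = d s - d t.
    rewrite (eq_bigr (fun v => d v * (v == s)%:R - d v * (v == t)%:R)); last first.
      by move=> v _; rewrite mulrBr.
    by rewrite sumrB !sum_ind.
  ring.
have ineq : \sum_a f a * (d (tgt a) - d (src a)) <= \sum_(a | S a) w a * `|f a|.
  rewrite (bigID S) /= [X in _ + X]big1 ?addr0; last first.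
    by move=> a /fz ->; rewrite mul0r.
  apply: ler_sum => a Sa.
  apply: le_trans (ler_norm _) _.
  rewrite normrM mulrC; apply: ler_wpM2r => //; exact: bound.
have dt : d t < K by rewrite /K; move: ineq; rewrite cons ds subr0; lra.
case: (pselect (exists P, pathto S t P)) => ht; last first.
  by move: dt; rewrite ((hdP _).2 ht) ltxx.
have [[P [hP hPd]] _] := (hdP t).1 ht.
exists P; split => //.
by rewrite hPd; move: ineq; rewrite cons ds subr0.
Qed.
End G.

Local Open Scope classical_set_scope.

Lemma conclude_k (R : realType) (a b : R) : 0 <= b ->
  (forall k, 0 < k < 1 -> k * a <= b) -> a <= b.
Proof.
move=> b0 h; case: (lerP a b) => // ba.
have a0 : 0 < a by apply: le_lt_trans ba.
have k0 : 0 < (b + a) / (2 * a) by rewrite divr_gt0 ?mulr_gt0 //; lra.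
have k1 : (b + a) / (2 * a) < 1 by rewrite ltr_pdivrMr ?mulr_gt0 //; lra.
have := h ((b + a) / (2 * a)); rewrite k0 k1 => /(_ isT).
have -> : (b + a) / (2 * a) * a = (b + a) / 2 by field; rewrite gt_eqF.
lra.
Qed.

Ltac pos := rewrite ?posrE; match goal with
  | |- is_true (0 < _ * _) => apply: mulr_gt0; pos
  | |- is_true (0 < _^-1) => rewrite invr_gt0; pos
  | |- is_true (0 < _ `^ _) => apply: powR_gt0; pos
  | _ => done
  end.
Ltac lnexp := repeat (first [rewrite ln_powR | rewrite lnM; try pos | rewrite lnV; try pos]).
Ltac fsolve := field; repeat (apply/andP; split); done.

Section P2.
Variables (R : realType) (r B : R).
Hypotheses (hr : 1 <= r) (hB : 0 < B).

Let r0 : 0 < r. Proof. have := hr; lra. Qed.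
Let r10 : 0 < r + 1. Proof. have := hr; lra. Qed.
Let hal : 0 < r / (r + 1) < 1.
Proof. apply/andP; split; first by rewrite divr_gt0.
by rewrite ltr_pdivrMr //; have := hr; lra. Qed.
Let hbe : 1 - r / (r + 1) = (r + 1)^-1.
Proof. field; rewrite gt_eqF //. Qed.

Lemma val_formula (T : finType) (P : {set T}) (c : T -> R) :
  (forall a, a \in P -> 0 <= c a) ->
  (\sum_(a in P) (c a / B `^ (r^-1)) `^ (r / (r + 1))) `^ ((r + 1) / r) =
  (\sum_(a in P) c a `^ (r / (r + 1))) `^ ((r + 1) / r) / B `^ (r^-1).
Proof.
move=> hc.
have Bq0 : 0 < B `^ r^-1 by rewrite powR_gt0.
have rn0 : r != 0 by rewrite gt_eqF.
have r1n0 : r + 1 != 0 by rewrite gt_eqF.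
rewrite (eq_bigr (fun a => c a `^ (r / (r + 1)) * ((B `^ r^-1)^-1) `^ (r / (r + 1)))); last first.
  by move=> a aP; rewrite powRM // ?hc // invr_ge0 ltW.
rewrite -mulr_suml powRM ?sumr_ge0 ?powR_ge0 //; last first.
  by move=> i _; apply: powR_ge0.
rewrite -powRrM.
have -> : r / (r + 1) * ((r + 1) / r) = 1 by fsolve.
by rewrite powRr1 // invr_ge0 ltW.
Qed.

Lemma term2 (c y F : R) : 0 <= c -> 0 < y -> 0 <= F ->
  (c * y) `^ (r / (r + 1)) * (F `^ (r + 1) / y `^ r) `^ (1 - r / (r + 1)) =
  c `^ (r / (r + 1)) * F.
Proof.
move=> c0 y0 F0.
have rn0 : r != 0 by rewrite gt_eqF.
have r1n0 : r + 1 != 0 by rewrite gt_eqF.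
rewrite hbe powRM ?(ltW y0) // powRM ?powR_ge0 ?invr_ge0 //.
rewrite -powRrM mulfV // powRr1 //.
have h : y `^ (r / (r + 1)) * ((y `^ r)^-1) `^ (r + 1)^-1 = 1.
  apply: pos_ln_eq; try pos; rewrite ln1; lnexp; fsolve.
transitivity (c `^ (r / (r + 1)) * F * (y `^ (r / (r + 1)) * ((y `^ r)^-1) `^ (r + 1)^-1)).
  ring.
  by rewrite h mulr1.
exact: powR_ge0.
Qed.

Lemma lower_bound (V A : finType) (src tgt : A -> V) (s t : V) (c gamma : A -> R)
  (P0 : {set A}) (x : A -> bool) (y : A -> R) :
  (forall a, 0 <= c a) -> (forall a, 0 <= gamma a) ->
  (forall P, is_st_path src tgt s t P ->
     path_value r B c gamma P0 <= path_value r B c gamma P) ->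
  ndp_feasible src tgt r B s t x y ->
  path_value r B c gamma P0 <= ndp_obj c gamma x y.
Proof.
move=> c0 g0 hmin [y0 hR hx].
have rn0 : r != 0 by rewrite gt_eqF.
have r1n0 : r + 1 != 0 by rewrite gt_eqF.
have hB' := hB.
have obj0 : 0 <= ndp_obj c gamma x y.
  by apply: sumr_ge0 => a _; rewrite addr_ge0 ?mulr_ge0 ?ler0n.
apply: conclude_k => // k /andP[k0 k1].
have kn0 : k != 0 by rewrite gt_eqF.
have kr1 : k `^ r < 1.
  have := @gt0_ltr_powR R r r0 k 1; rewrite !nnegrE powR1.
  by move=> /(_ (ltW k0) ler01 k1).
have kr0 : 0 < k `^ r by rewrite powR_gt0.
set B' := B / k `^ r.
have B'0 : 0 < B' by rewrite divr_gt0.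
have BB' : B < B' by rewrite /B' ltr_pdivlMr //; nra.
have : (Reff src tgt r s t y < B'%:E)%E by apply: le_lt_trans hR _; rewrite lte_fin.
case/ereal_inf_lt => z [f hf <-]; rewrite lte_fin => hQ.
set w := fun a => c a `^ (r / (r + 1)).
have w0 : forall a, 0 <= w a by move=> a; apply: powR_ge0.
have [P [[hP hPS] hW]] := @flow_path V A src tgt s R y w f t w0 hf.
have huv : forall i, supp y i -> 0 <= c i * y i /\ 0 <= `|f i| `^ (r + 1) / y i `^ r.
  move=> i yi; split; first by rewrite mulr_ge0 // ltW.
  by rewrite divr_ge0 ?powR_ge0.
have hh := @holder R A (supp y) (r / (r + 1)) (fun a => c a * y a)
  (fun a => `|f a| `^ (r + 1) / y a `^ r) hal huv.
rewrite /= (eq_bigr (fun i => w i * `|f i|)) in hh; last first.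
  by move=> i yi; rewrite term2.
set Us := \sum_(i | supp y i) c i * y i in hh.
set Q := \sum_(i | supp y i) `|f i| `^ (r + 1) / y i `^ r in hh hQ.
have Us0 : 0 <= Us by apply: sumr_ge0 => i /huv[].
have Q0 : 0 <= Q by apply: sumr_ge0 => i /huv[].
have be0 : 0 <= 1 - r / (r + 1) by rewrite hbe invr_ge0 ltW.
have e0 : 0 <= (r + 1) / r by rewrite divr_ge0 // ltW.
set W := \sum_(a in P) w a in hW.
have W0 : 0 <= W by apply: sumr_ge0.
have hW2 : W <= Us `^ (r / (r + 1)) * B' `^ (1 - r / (r + 1)).
  apply: (le_trans hW); apply: (le_trans hh); apply: ler_wpM2l; first exact: powR_ge0.
  by apply: (ge0_ler_powR be0); rewrite ?nnegrE // ltW.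
have hW3 : W `^ ((r + 1) / r) <= Us * (B `^ r^-1 / k).
  apply: (@le_trans _ _ ((Us `^ (r / (r + 1)) * B' `^ (1 - r / (r + 1))) `^ ((r + 1) / r))).
    by apply: (ge0_ler_powR e0); rewrite ?nnegrE ?mulr_ge0 ?powR_ge0.
  rewrite powRM ?powR_ge0 // -!powRrM hbe.
  have -> : r / (r + 1) * ((r + 1) / r) = 1 by fsolve.
  have -> : (r + 1)^-1 * ((r + 1) / r) = r^-1 by fsolve.
  rewrite powRr1 //.
  have -> : B' `^ r^-1 = B `^ r^-1 / k.
    by rewrite /B'; apply: pos_ln_eq; try pos; lnexp; fsolve.
  by [].
have hobj : ndp_obj c gamma x y = Us + \sum_a gamma a * (x a)%:R.
  rewrite /ndp_obj big_split /=; congr (_ + _).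
  rewrite (bigID (supp y)) /= [X in _ + X]big1 ?addr0 // => a ns.
  have : y a = 0.
    by move: (y0 a); rewrite le_eqVlt => /predU1P[<-//|h]; move: ns; rewrite /supp h.
  by move=> ->; rewrite mulr0.
have hgam : \sum_(a in P) gamma a <= \sum_a gamma a * (x a)%:R.
  rewrite [X in _ <= X](bigID (fun a => a \in P)) /=.
  apply: (@le_trans _ _ (\sum_(a in P) gamma a * (x a)%:R + 0)).
    rewrite addr0 le_eqVlt; apply/orP; left; apply/eqP; apply: eq_bigr => a aP.
    by rewrite (hx a (hPS a aP)) mulr1.
  by rewrite lerD2l; apply: sumr_ge0 => a _; rewrite mulr_ge0.
have hPV : path_value r B c gamma P = W `^ ((r + 1) / r) / B `^ r^-1 + \sum_(a in P) gamma a.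
  by rewrite /path_value /cprime val_formula.
have Bq0 : 0 < B `^ r^-1 by rewrite powR_gt0.
have G0 : 0 <= \sum_(a in P) gamma a by apply: sumr_ge0.
apply: (@le_trans _ _ (k * path_value r B c gamma P)).
  by rewrite ler_pM2l // hmin.
rewrite hPV hobj mulrDr; apply: lerD; last first.
  apply: (@le_trans _ _ (\sum_(a in P) gamma a)) => //; nra.
rewrite mulrA ler_pdivrMr //.
have := ler_wpM2l (ltW k0) hW3; move=> h; apply: (le_trans h).
rewrite le_eqVlt; apply/orP; left; apply/eqP; fsolve.
Qed.

Lemma upper_bound (V A : finType) (src tgt : A -> V) (s t : V) (c gamma : A -> R)
  (P0 : {set A}) :
  (forall a, 0 <= c a) -> (forall a, 0 <= gamma a) ->
  is_st_path src tgt s t P0 -> forall e, 0 < e ->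
  exists x y, ndp_feasible src tgt r B s t x y /\
    ndp_obj c gamma x y <= path_value r B c gamma P0 + e.
Proof.
move=> c0 g0 hP e e0.
have rn0 : r != 0 by rewrite gt_eqF.
have r1n0 : r + 1 != 0 by rewrite gt_eqF.
have hB' := hB.
have [f [fz [f1 fcons]]] := @path_flow V A src tgt s R t P0 hP.
set Pp0 := [set a in P0 | 0 < c a].
set val := (\sum_(a in P0) cprime r B c a) `^ ((r + 1) / r).
have val0 : 0 <= val by apply: powR_ge0.
have [y0 [y0p [y0s y0c]]] : exists y0 : A -> R, (forall a, a \in Pp0 -> 0 < y0 a) /\
    \sum_(a in Pp0) y0 a `^ (- r) <= B /\ \sum_(a in Pp0) c a * y0 a <= val.
  case: (boolP (Pp0 == finset.set0)) => hne.
    exists (fun _ => 1); rewrite (eqP hne) !big_set0; split; first by move=> a; rewrite inE.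
    by split => //; apply: ltW.
  have := @part1 R r B hr hB A P0 c (fun a _ => c0 a) hne.
  case=> [[h1 h2] h3 _ _].
  eexists; split; first exact: h1.
  by split; [rewrite h2 | rewrite h3].
set k := 1 + e / (val + 1).
have k1 : 1 < k by rewrite /k ltrDl divr_gt0 //; lra.
have k0 : 0 < k by lra.
have kn0 : k != 0 by rewrite gt_eqF.
have kr : k `^ (- r) < 1.
  rewrite powRN invf_lt1 ?powR_gt0 //.
  have := @gt0_ltr_powR R r r0 1 k; rewrite !nnegrE powR1.
  by move=> /(_ ler01 (ltW k0) k1).
have kr0 : 0 < k `^ (- r) by rewrite powR_gt0.
set d := B * (1 - k `^ (- r)).
have d0 : 0 < d by rewrite /d mulr_gt0 // subr_gt0.
set n := #|A|.
set d' := d / (n.+1)%:R.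
have d'0 : 0 < d' by rewrite /d' divr_gt0 // ltr0Sn.
set M := d' `^ (- r^-1).
have M0 : 0 < M by rewrite powR_gt0.
have hM : M `^ (- r) = d'.
  rewrite /M -powRrM.
  have -> : - r^-1 * - r = 1 by fsolve.
  by rewrite powRr1 // ltW.
set y := fun a => if a \in Pp0 then k * y0 a else if a \in P0 then M else 0.
set x := fun a => a \in P0.
have ypos : forall a, a \in P0 -> 0 < y a.
  move=> a aP; rewrite /y; case: ifP => [h|_]; first by rewrite mulr_gt0 // y0p.
  by rewrite aP.
have yz : forall a, a \notin P0 -> y a = 0.
  move=> a /negbTE aP; rewrite /y aP inE aP /=.
  by [].
have suppE : forall a, supp y a = (a \in P0).
  move=> a; case: (boolP (a \in P0)) => aP; first by rewrite /supp ypos.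
  by rewrite /supp yz // ltxx.
have y_ge0 : forall a, 0 <= y a.
  move=> a; case: (boolP (a \in P0)) => aP; [exact: ltW (ypos a aP)|by rewrite yz].
have hQ : \sum_(a | supp y a) (`|f a| `^ (r + 1) / y a `^ r) <= B.
  rewrite (eq_bigl (fun a => a \in P0)); last by move=> a; rewrite suppE.
  rewrite (eq_bigr (fun a => y a `^ (- r))); last first.
    by move=> a aP; rewrite f1 // powR1 div1r powRN.
  rewrite (bigID (fun a => 0 < c a)) /=.
  rewrite (eq_bigl (fun a => a \in Pp0)); last by move=> a; rewrite inE.
  rewrite (eq_bigr (fun a => k `^ (- r) * y0 a `^ (- r))); last first.
    move=> a aP; rewrite /y aP powRM //; [exact: ltW | exact: ltW (y0p a aP)].
  rewrite -mulr_sumr.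
  rewrite [X in _ + X](eq_bigr (fun a => d')); last first.
    move=> a /andP[aP nc]; rewrite /y.
    have -> : (a \in Pp0) = false by rewrite inE aP (negbTE nc).
    by rewrite aP hM.
  have h1 : \sum_(i | (i \in P0) && ~~ (0 < c i)) d' <= d.
    apply: (@le_trans _ _ (\sum_(i : A) d')).
      rewrite [X in _ <= X](bigID (fun i => (i \in P0) && ~~ (0 < c i))) /= lerDl.
      by apply: sumr_ge0 => i _; apply: ltW.
    rewrite sumr_const -/n -mulr_natl /d' mulrCA ger_pMr // ler_pdivrMr ?ltr0Sn //.
    by rewrite mul1r ler_nat.
  have h2 : k `^ (- r) * \sum_(i in Pp0) y0 i `^ (- r) <= k `^ (- r) * B.
    by rewrite ler_pM2l.
  rewrite /d in h1; nra.
exists x, y; split.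
  split => //.
    apply: ge_ereal_inf.
    exists ((\sum_(a | supp y a) (`|f a| `^ (r + 1) / y a `^ r))%:E); last by rewrite lee_fin.
    exists f => //; split => //.
    by move=> a; rewrite suppE; exact: fz.
  by move=> a ya; rewrite /x -suppE.
rewrite /ndp_obj big_split /=.
have hcy : \sum_a c a * y a = k * \sum_(a in Pp0) c a * y0 a.
  rewrite (bigID (fun a => a \in Pp0)) /= [X in _ + X]big1 ?addr0; last first.
    move=> a /negbTE na; rewrite /y na.
    case: (boolP (a \in P0)) => aP; last by rewrite mulr0.
    have : ~~ (0 < c a) by move: na; rewrite inE aP /= => ->.
    rewrite -leNgt => ca; have -> : c a = 0 by apply/eqP; rewrite eq_le ca c0.
    by rewrite mul0r.
  rewrite mulr_sumr; apply: eq_bigr => a aP; rewrite /y aP; ring.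
have hgx : \sum_a gamma a * (x a)%:R = \sum_(a in P0) gamma a.
  rewrite [RHS]big_mkcond; apply: eq_bigr => a _; rewrite /x.
  by case: (a \in P0); rewrite ?mulr1 ?mulr0.
rewrite hcy hgx /path_value -/val.
have hk : k * val <= val + e.
  rewrite /k mulrDl mul1r lerD2l mulrAC ler_pdivrMr; last by lra.
  nra.
have : k * \sum_(a in Pp0) c a * y0 a <= k * val by rewrite ler_pM2l.
lra.
Qed.
End P2.

Theorem mainTheorem8 (R : realType) (r B : R) (hr : 1 <= r) (hB : 0 < B) :
  (* Part 1: the closed-form solution of the single-path subproblem *)
  (forall (T : finType) (P : {set T}) (c : T -> R),
     (forall a, a \in P -> 0 <= c a) ->
     let Pp := [set a in P | 0 < c a] in
     Pp != finset.set0 ->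
     let ystar := fun a : T =>
       (\sum_(a' in P) c a' `^ (r / (r + 1))) `^ (r^-1)
         / (c a `^ ((r + 1)^-1) * B `^ (r^-1)) in
     let feas := fun y : T -> R =>
       (forall a, a \in Pp -> 0 < y a) /\ \sum_(a in Pp) y a `^ (- r) = B in
     let obj := fun y : T -> R => \sum_(a in Pp) c a * y a in
     let val := (\sum_(a in P) (c a / B `^ (r^-1)) `^ (r / (r + 1))) `^ ((r + 1) / r) in
     [/\ feas ystar, obj ystar = val,
         forall y, feas y -> val <= obj y
       & forall y, feas y -> obj y = val -> forall a, a \in Pp -> y a = ystar a]) /\
  (* Part 2: the optimal value of the Network Design Problem with ybar == oo *)
  (forall (V A : finType) (src tgt : A -> V) (s t : V) (c gamma : A -> R),
     weakly_connected src tgt -> s != t ->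
     (forall a, 0 <= c a) -> (forall a, 0 <= gamma a) ->
     exists P0 : {set A},
       [/\ is_st_path src tgt s t P0,
           forall P, is_st_path src tgt s t P ->
             path_value r B c gamma P0 <= path_value r B c gamma P
         & ndp_value src tgt r B s t c gamma = (path_value r B c gamma P0)%:E]).
Proof.
split.
  exact: (@part1 R r B hr hB).
move=> V A src tgt s t c gamma hw hst c0 g0.
have [P1 hP1] := @conn_path V A src tgt s R t hw.
have [P0 [hP0 hmin]] := @ex_min R _ (fun P => is_st_path src tgt s t P)
  (path_value r B c gamma) (ex_intro _ P1 hP1).
exists P0; split => //.
apply/eqP; rewrite eq_le; apply/andP; split.
  apply/lee_addgt0Pr => e e0.
  have [x [y [hf hobj]]] := @upper_bound R r B hr hB V A src tgt s t c gamma P0 c0 g0 hP0 e e0.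
  apply: ge_ereal_inf; exists ((ndp_obj c gamma x y)%:E); last by rewrite -EFinD lee_fin.
  by exists (x, y).
apply: le_ereal_inf_tmp => z [[x y] /= hf <-].
rewrite lee_fin.
exact: (@lower_bound R r B hr hB V A src tgt s t c gamma P0 x y c0 g0 hmin hf).
Qed.
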